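(* With the notation and hypotheses of the uniform case (continuous $V_a$ with $0<V_a^{min}\le V_a\le V_a^{max}$, $\hat V_a=V_a/V_a^*$, delays $\tau_{min}(t),\tau_{max}(t)$ defined by $\mathcal{T}\mp V_a^*\delta=\int_{t-\tau_{min/max}(t)}^tV_a(s)ds$, and $A_U(t)=\frac1{2\delta}\int_{\tau_{min}(t)}^{\tau_{max}(t)}\frac{\beta x(t-\phi)}{\hat V_a(t-\phi)}e^{-\int_{t-\phi}^t\mu(x(s))ds}d\phi$), consider the uniformly distributed DDE $$\frac{d}{dt}x(t)=F(x(t),A_U(t)V_a(t))-\gamma(x(t))x(t),\quad t>t_0;\qquad x(s)=\rho(s),\ s\le t_0, \tag{U}$$ and the two-delay system $$\frac{d}{dt}x(t)=F(x(t),y(t)V_a(t))-\gamma(x(t))x(t),$$ $$\frac{d}{dt}y(t)=\frac1{2\delta}\Big[\frac{\beta x(t-\tau_{min}(t))}{\hat V_a(t-\tau_{min}(t))}e^{-\int_{t-\tau_{min}(t)}^t\mu(x(s))ds}\frac{V_a(t)}{V_a(t-\tau_{min}(t))}-\frac{\beta x(t-\tau_{max}(t))}{\hat V_a(t-\tau_{max}(t))}e^{-\int_{t-\tau_{max}(t)}^t\mu(x(s))ds}\frac{V_a(t)}{V_a(t-\tau_{max}(t))}\Big]-\mu(x(t))y(t). \tag{D}$$ (i) If $x$ solves (U) with history $\rho$, then $(x,y)$ with $y=A_U$ solves (D) with history $x(s)=\rho(s)$ and initial value $y(t_0)=\frac1{2\delta}\int_{\tau_{min}(t_0)}^{\tau_{max}(t_0)}\frac{\beta\rho(t_0-\phi)}{\hat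 V_a(t_0-\phi)}e^{-\int_{t_0-\phi}^{t_0}\mu(\rho(s))ds}d\phi$. (ii) A solution $(x,y)$ of (D) with history $x(s)=\eta(s)$, $s\le t_0$, gives a solution $x$ of (U) with history $\eta$ (with $y=A_U$) if and only if $y(t_0)=\frac1{2\delta}\int_{\tau_{min}(t_0)}^{\tau_{max}(t_0)}\frac{\beta\eta(t_0-\phi)}{\hat V_a(t_0-\phi)}e^{-\int_{t_0-\phi}^{t_0}\mu(\eta(s))ds}d\phi$.
   Context: $F$ is the influx function, $\gamma$ the clearance rate, $\mu$ the immature death rate, $\beta>0$, $\delta>0$, $\mathcal{T}>V_a^*\delta$ the mean maturation age. *)

(* Defs.v *)
From Stdlib Require Import Reals Lra ClassicalEpsilon.
Open Scope R_scope.

(* Total Riemann integral: the value of the Riemann integral of f over [a,b]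
   when f is Riemann integrable there (the value does not depend on the proof
   of integrability), and 0 otherwise. All integrands in the statement are
   continuous, so only the first branch is ever relevant. *)
Definition RInt (f : R -> R) (a b : R) : R :=
  match excluded_middle_informative
          (exists v, exists pr : Riemann_integrable f a b, RiemannInt pr = v) with
  | left H => proj1_sig (constructive_indefinite_description _ H)
  | right _ => 0
  end.

Definition Vhat (Va : R -> R) (Vs : R) (s : R) : R := Va s / Vs.

Definition kernel (beta : R) (mu : R -> R) (Va : R -> R) (Vs : R)
  (x : R -> R) (t phi : R) : R :=
  beta * x (t - phi) / Vhat Va Vs (t - phi)
  * exp (- RInt (fun s => mu (x s)) (t - phi) t).

Definition A_U (beta delta : R) (mu : R -> R) (Va : R -> R) (Vs : R)
  (tmin tmax : R -> R) (x : R -> R) (t : R) : R :=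
  / (2 * delta) * RInt (kernel beta mu Va Vs x t) (tmin t) (tmax t).

Definition cont_from (t0 : R) (f : R -> R) : Prop :=
  forall t, t0 <= t -> forall eps, 0 < eps ->
    exists d, 0 < d /\ forall s, t0 <= s -> Rabs (s - t) < d ->
      Rabs (f s - f t) < eps.

Definition solves_U (F : R -> R -> R) (gamma mu : R -> R) (beta delta : R)
  (Va : R -> R) (Vs : R) (tmin tmax : R -> R) (t0 : R) (rho x : R -> R) : Prop :=
  (forall s, s <= t0 -> x s = rho s) /\
  (forall t, continuity_pt x t) /\
  (forall t, t0 < t ->
     derivable_pt_lim x t
       (F (x t) (A_U beta delta mu Va Vs tmin tmax x t * Va t) - gamma (x t) * x t)).

Definition solves_D (F : R -> R -> R) (gamma mu : R -> R) (beta delta : R)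
  (Va : R -> R) (Vs : R) (tmin tmax : R -> R) (t0 : R) (eta x y : R -> R) : Prop :=
  (forall s, s <= t0 -> x s = eta s) /\
  (forall t, continuity_pt x t) /\
  cont_from t0 y /\
  (forall t, t0 < t ->
     derivable_pt_lim x t (F (x t) (y t * Va t) - gamma (x t) * x t)) /\
  (forall t, t0 < t ->
     derivable_pt_lim y t
       (/ (2 * delta) *
          (kernel beta mu Va Vs x t (tmin t) * (Va t / Va (t - tmin t))
           - kernel beta mu Va Vs x t (tmax t) * (Va t / Va (t - tmax t)))
        - mu (x t) * y t)).

(* Main.v *)
From Stdlib Require Import Reals Lra ClassicalEpsilon FunctionalExtensionality.
From Coquelicot Require Import Coquelicot.
Require Import Defs.
Open Scope R_scope.

Lemma cpt_c (f : R -> R) x : continuity_pt f x -> continuous f x.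
Proof. intro H. now apply continuity_pt_filterlim. Qed.
Lemma c_cpt (f : R -> R) x : continuous f x -> continuity_pt f x.
Proof. intro H. now apply continuity_pt_filterlim. Qed.

Lemma ex_cont (f : R -> R) a b : (forall z, continuous f z) -> ex_RInt f a b.
Proof. intro H. apply (ex_RInt_continuous (V:=R_CompleteNormedModule)). intros; apply H. Qed.

Lemma DR_eq (f : R -> R) a b : ex_RInt f a b -> Defs.RInt f a b = RInt.RInt f a b.
Proof.
  intro H. pose proof (ex_RInt_Reals_0 _ _ _ H) as pr.
  unfold Defs.RInt. destruct excluded_middle_informative as [e|n].
  - destruct constructive_indefinite_description as [v [pr' Hv]]. simpl.
    rewrite <- Hv. symmetry. apply RInt_Reals.
  - exfalso. apply n. exists (RiemannInt pr), pr. reflexivity.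
Qed.

Lemma DR_ext (f g : R -> R) a b :
  (forall s, Rmin a b <= s <= Rmax a b -> f s = g s) -> Defs.RInt f a b = Defs.RInt g a b.
Proof.
  intro H.
  assert (tr : forall f g : R -> R, (forall s, Rmin a b <= s <= Rmax a b -> f s = g s) ->
     Riemann_integrable f a b -> Riemann_integrable g a b).
  { intros f0 g0 H0 pf. apply ex_RInt_Reals_0. eapply ex_RInt_ext; [|apply ex_RInt_Reals_1, pf].
      intros; apply H0; lra. }
  unfold Defs.RInt at 1.
  destruct excluded_middle_informative as [e|nf].
  - destruct constructive_indefinite_description as [v [pf Hv]]. simpl.
    pose proof (tr f g H pf) as pg.
    rewrite (DR_eq g a b (ex_RInt_Reals_1 _ _ _ pg)).
    rewrite (RInt_Reals _ _ _ pg), <- Hv.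
    apply RiemannInt_ext. exact H.
  - unfold Defs.RInt.
    destruct excluded_middle_informative as [e|]; [|reflexivity].
    exfalso. destruct e as [v [p _]]. apply nf. exists (RiemannInt (tr g f (fun s hs => eq_sym (H s hs)) p)).
    eexists. reflexivity.
Qed.

Lemma prim (f : R -> R) v : (forall z, continuous f z) ->
  is_derive (fun w => RInt.RInt f 0 w) v (f v).
Proof.
  intro H. apply is_derive_RInt with 0.
  - apply filter_forall. intro b. apply RInt_correct, ex_cont, H.
  - apply H.
Qed.

Lemma chas (f : R -> R) a b : (forall z, continuous f z) ->
  RInt.RInt f a b = RInt.RInt f 0 b - RInt.RInt f 0 a.
Proof.
  intro H. pose proof (RInt_Chasles f 0 a b (ex_cont _ _ _ H) (ex_cont _ _ _ H)) as E.
  change (RInt.RInt f 0 a + RInt.RInt f a b = RInt.RInt f 0 b) in E. lra.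
Qed.

Lemma RInt_bounds (f : R -> R) m M a b : (forall z, continuous f z) ->
  (forall z, m <= f z <= M) -> a <= b ->
  m * (b - a) <= RInt.RInt f a b <= M * (b - a).
Proof.
  intros Hc Hb Hab. split.
  - replace (m * (b - a)) with (RInt.RInt (fun _ => m) a b).
    + apply RInt_le; auto. apply ex_RInt_const. apply ex_cont, Hc. intros; apply Hb.
    + rewrite RInt_const. change (scal ?x ?y) with (x * y). simpl. ring.
  - replace (M * (b - a)) with (RInt.RInt (fun _ => M) a b).
    + apply RInt_le; auto. apply ex_cont, Hc. apply ex_RInt_const. intros; apply Hb.
    + rewrite RInt_const. change (scal ?x ?y) with (x * y). simpl. ring.
Qed.

Lemma linearize (f : R -> R) p l : derivable_pt_lim f p l ->
  forall e, 0 < e -> exists d, 0 < d /\ forall z, Rabs z < d -> Rabs (f (p+z) - f p - l*z) <= e * Rabs z.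
Proof.
  intros Hd e He. destruct (Hd e He) as [d Hd']. exists d. split; [apply cond_pos|].
  intros z Hz. destruct (Req_dec z 0) as [->|Hz0].
  - rewrite Rplus_0_r. replace (f p - f p - l*0) with 0 by ring. rewrite Rabs_R0. lra.
  - specialize (Hd' z Hz0 Hz).
    replace (f (p+z) - f p - l*z) with (z * ((f (p+z) - f p)/z - l)) by (field; auto).
    rewrite Rabs_mult. rewrite (Rmult_comm e). apply Rmult_le_compat_l; [apply Rabs_pos|lra].
Qed.

Lemma implicit (H h a : R -> R) (c m Mx t : R) :
 0 < m ->
 (forall p q, p <= q -> m*(q-p) <= H q - H p <= Mx*(q-p)) ->
 (forall p, derivable_pt_lim H p (h p)) ->
 (forall p, m <= h p) ->
 (forall s, H (a s) = H s - c) ->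
 derivable_pt_lim a t (h t / h (a t)).
Proof.
  intros Hm Hb Hd Hh Ha.
  assert (Habs : forall p q, m*Rabs(q-p) <= Rabs(H q - H p) <= Mx*Rabs(q-p)).
  { intros p q. destruct (Rle_dec p q).
    - specialize (Hb p q r). rewrite (Rabs_pos_eq (q-p)) by lra.
      rewrite (Rabs_pos_eq (H q - H p)) by nra. lra.
    - specialize (Hb q p ltac:(lra)). rewrite (Rabs_left (q-p)) by lra.
      rewrite (Rabs_left1 (H q - H p)) by nra. lra. }
  assert (HmM : m <= Mx) by (specialize (Hb 0 1 ltac:(lra)); lra).
  set (L := Mx / m).
  assert (HL : 0 <= L) by (unfold L; apply Rmult_le_pos; [lra|left; apply Rinv_0_lt_compat; lra]).
  assert (Lip : forall z, Rabs (a (t+z) - a t) <= L * Rabs z).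
  { intro z. pose proof (Habs (a t) (a (t+z))) as [H1 _].
    pose proof (Habs t (t+z)) as [_ H2].
    rewrite !Ha in H1. replace (H (t+z) - c - (H t - c)) with (H (t+z) - H t) in H1 by ring.
    replace (t+z-t) with z in H2 by ring.
    unfold L. apply (Rmult_le_reg_l m); [lra|].
    replace (m * (Mx / m * Rabs z)) with (Mx * Rabs z) by (field; lra). lra. }
  intros eps Heps.
  set (e := eps * m / (2 * (1 + L))).
  assert (He : 0 < e) by (unfold e; apply Rdiv_lt_0_compat; nra).
  destruct (linearize H (a t) (h (a t)) (Hd (a t)) e He) as [d1 [Hd1 Hl1]].
  destruct (linearize H t (h t) (Hd t) e He) as [d2 [Hd2 Hl2]].
  assert (Hdd : 0 < Rmin d2 (d1 / (1 + L))).
  { apply Rmin_pos; [lra|apply Rdiv_lt_0_compat; lra]. }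
  exists (mkposreal _ Hdd). simpl. intros z Hz0 Hz.
  assert (Hz2 : Rabs z < d2) by (eapply Rlt_le_trans; [exact Hz|apply Rmin_l]).
  assert (Hz1 : Rabs z < d1 / (1 + L)) by (eapply Rlt_le_trans; [exact Hz|apply Rmin_r]).
  set (D := a (t+z) - a t).
  assert (HD : Rabs D <= L * Rabs z) by apply Lip.
  assert (HD1 : Rabs D < d1).
  { apply Rle_lt_trans with (L * Rabs z); [exact HD|].
    apply Rmult_lt_compat_l with (r := 1 + L) in Hz1; [|lra].
    replace ((1 + L) * (d1 / (1 + L))) with d1 in Hz1 by (field; lra).
    pose proof (Rabs_pos z). nra. }
  specialize (Hl1 D HD1). specialize (Hl2 z Hz2).
  replace (a t + D) with (a (t+z)) in Hl1 by (unfold D; ring).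
  rewrite (Ha (t+z)), (Ha t) in Hl1.
  set (k := h (a t)) in *.
  assert (Hk : m <= k) by apply Hh.
  assert (Hza : 0 < Rabs z) by (apply Rabs_pos_lt; exact Hz0).
  assert (Hnum : Rabs (k * D - h t * z) <= e * (1 + L) * Rabs z).
  { replace (k * D - h t * z) with
       ((H (t + z) - H t - h t * z) - (H (t + z) - c - (H t - c) - k * D)) by ring.
    eapply Rle_trans; [apply Rabs_triang|]. rewrite Rabs_Ropp. nra. }
  replace (D / z - h t / k) with ((k * D - h t * z) / (k * z))
    by (field; split; lra).
  unfold Rdiv. rewrite Rabs_mult, Rabs_inv, Rabs_mult. rewrite (Rabs_pos_eq k) by lra.
  apply (Rmult_lt_reg_r (k * Rabs z)); [nra|].
  rewrite Rmult_assoc, Rinv_l by nra. rewrite Rmult_1_r.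
  assert (E : e * (1 + L) = eps * m / 2) by (unfold e; field; lra).
  rewrite E in Hnum. assert (0 < eps * Rabs z) by nra.
  assert (eps * m / 2 * Rabs z < eps * (k * Rabs z)) by nra. lra.
Qed.

Lemma uniq (m w : R -> R) t0 :
 (forall z, continuous m z) -> cont_from t0 w ->
 (forall t, t0 < t -> derivable_pt_lim w t (- m t * w t)) -> w t0 = 0 ->
 forall t, t0 <= t -> w t = 0.
Proof.
  intros Hm Hw Hd H0.
  set (Mm := fun v => RInt.RInt m 0 v).
  set (E := fun s => exp (Mm s)).
  set (P := fun s => w s * E s).
  assert (dE : forall s, is_derive E s (m s * E s)).
  { intro s. apply (is_derive_comp exp Mm s (exp (Mm s)) (m s)).
    apply is_derive_exp. apply prim, Hm. }
  assert (dP : forall s, t0 < s -> is_derive P s 0).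
  { intros s Hs. pose proof (is_derive_mult w E s _ _ (proj2 (is_derive_Reals _ _ _) (Hd s Hs)) (dE s)) as HH.
    specialize (HH ltac:(intros; apply Rmult_comm)).
    replace 0 with (plus (mult (- m s * w s) (E s)) (mult (w s) (m s * E s))).
    exact HH. change (- m s * w s * E s + w s * (m s * E s) = 0). ring. }
  assert (cP : forall s, t0 < s -> continuity_pt P s).
  { intros s Hs. apply derivable_continuous_pt. exists 0. apply is_derive_Reals, dP, Hs. }
  intros t Ht. destruct Ht as [Ht|<-]; [|assumption].
  assert (Hc : forall s, t0 < s <= t -> P t = P s).
  { intros s Hs. destruct Hs as [Hs1 [Hs2|<-]]; [|reflexivity].
    pose proof (MVT_gen P s t (fun _ => 0)) as HM. cbv zeta in HM.
    rewrite Rmin_left, Rmax_right in HM by lra.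
    destruct HM as [c [_ Hc]].
    - intros; apply dP; lra.
    - intros; apply cP; lra.
    - lra. }
  assert (HPt : P t = 0).
  { apply Rabs_eq_0. apply Rle_antisym; [|apply Rabs_pos].
    apply Rnot_lt_le. intro Hpos. set (eps := Rabs (P t)) in *.
    assert (HE0 : 0 < E t0) by apply exp_pos.
    pose proof (derivable_continuous_pt E t0 (exist _ _ (proj1 (is_derive_Reals _ _ _) (dE t0)))) as cE.
    unfold continuity_pt, continue_in, limit1_in, limit_in in cE. simpl in cE. unfold R_dist in cE.
    destruct (cE 1 ltac:(lra)) as [d1 [Hd1 Hd1']].
    assert (He' : 0 < eps / (E t0 + 1)) by (apply Rdiv_lt_0_compat; lra).
    destruct (Hw t0 (Rle_refl _) _ He') as [d2 [Hd2 Hd2']].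
    set (s := t0 + Rmin (Rmin d1 d2) (t - t0) / 2).
    assert (Hm1 : 0 < Rmin (Rmin d1 d2) (t - t0)) by (repeat apply Rmin_pos; lra).
    assert (Hm2 := Rmin_l (Rmin d1 d2) (t - t0)). assert (Hm3 := Rmin_r (Rmin d1 d2) (t - t0)).
    assert (Hm4 := Rmin_l d1 d2). assert (Hm5 := Rmin_r d1 d2).
    assert (Hs : t0 < s <= t) by (unfold s; lra).
    assert (Has : Rabs (s - t0) = s - t0) by (apply Rabs_pos_eq; lra).
    assert (HEs : Rabs (E s - E t0) < 1).
    { apply Hd1'. split; [split; [exact I|lra]|]. rewrite Has. unfold s; lra. }
    assert (Hws : Rabs (w s - w t0) < eps / (E t0 + 1)).
    { apply Hd2'; [lra|]. rewrite Has. unfold s; lra. }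
    rewrite H0, Rminus_0_r in Hws.
    assert (HEs' : 0 < E s) by apply exp_pos.
    apply Rabs_def2 in HEs.
    assert (HA : eps / (E t0 + 1) * (E t0 + 1) = eps) by (field; lra).
    assert (HH : Rabs (P s) < eps).
    { unfold P. rewrite Rabs_mult, (Rabs_pos_eq (E s)) by lra.
      pose proof (Rabs_pos (w s)).
      assert (Rabs (w s) * E s <= eps / (E t0 + 1) * E s) by nra.
      assert (eps / (E t0 + 1) * E s < eps / (E t0 + 1) * (E t0 + 1)) by nra.
      lra. }
    rewrite <- Hc in HH by exact Hs. unfold eps in HH. lra. }
  unfold P in HPt. assert (0 < E t) by apply exp_pos.
  apply Rmult_integral in HPt. destruct HPt; [assumption|lra].
Qed.

Lemma cont_of_der (f : R -> R) x l : is_derive f x l -> continuous f x.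
Proof. intro H. apply cpt_c. apply derivable_continuous_pt. exists l. apply is_derive_Reals, H. Qed.

Section Kern.
Variables (beta delta Vs Vmin Vmax c1 : R) (mu Va tmin x : R -> R).
Hypothesis hVs : 0 < Vs.
Hypothesis hmu : forall u, continuity_pt mu u.
Hypothesis hVa : forall s, continuity_pt Va s.
Hypothesis hVmin : 0 < Vmin.
Hypothesis hVbd : forall s, Vmin <= Va s <= Vmax.
Hypothesis htmin : forall t, c1 = Defs.RInt Va (t - tmin t) t.
Hypothesis hx : forall t, continuity_pt x t.

Definition HH (v : R) := RInt.RInt Va 0 v.

Lemma cVa : forall z, continuous Va z.
Proof. intro; apply cpt_c, hVa. Qed.

Lemma H_bounds : forall p q, p <= q -> Vmin*(q-p) <= HH q - HH p <= Vmax*(q-p).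
Proof.
  intros p q Hpq. unfold HH. rewrite <- chas by apply cVa.
  apply RInt_bounds; auto. apply cVa.
Qed.

Lemma H_der : forall p, derivable_pt_lim HH p (Va p).
Proof. intro p. apply is_derive_Reals. apply prim, cVa. Qed.

Lemma a_eq : forall s, HH (s - tmin s) = HH s - c1.
Proof.
  intro s. rewrite (htmin s). rewrite DR_eq by (apply ex_cont, cVa).
  unfold HH. rewrite (chas Va (s - tmin s) s) by apply cVa. lra.
Qed.

Lemma a_der : forall t, derivable_pt_lim (fun s => s - tmin s) t (Va t / Va (t - tmin t)).
Proof.
  intro t. apply (implicit HH Va (fun s => s - tmin s) c1 Vmin Vmax t hVmin H_bounds H_der).
  - intro; apply hVbd.
  - apply a_eq.
Qed.

Lemma tmin_pos : 0 < c1 -> forall t, 0 < tmin t.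
Proof.
  intros Hc t. apply Rnot_le_lt. intro Hn.
  pose proof (a_eq t). pose proof (H_bounds t (t - tmin t) ltac:(lra)). nra.
Qed.

Definition mx (s : R) := mu (x s).
Definition MM (v : R) := RInt.RInt mx 0 v.
Definition gg (u : R) := beta * x u / Vhat Va Vs u * exp (MM u).
Definition GG (v : R) := RInt.RInt gg 0 v.

Lemma cmx : forall z, continuous mx z.
Proof. intro z. unfold mx. apply continuous_comp; apply cpt_c; auto. Qed.

Lemma dMM : forall t, is_derive MM t (mx t).
Proof. intro; apply prim, cmx. Qed.

Lemma cgg : forall z, continuous gg z.
Proof.
  intro z. unfold gg, Vhat, Rdiv.
  apply (continuous_mult (fun u => beta * x u * / (Va u * / Vs)) (fun u => exp (MM u))).
  - apply (continuous_mult (fun u => beta * x u) (fun u => / (Va u * / Vs))).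
    + apply (continuous_mult (fun _ => beta) x). apply continuous_const. apply cpt_c, hx.
    + apply continuous_Rinv_comp.
      * apply (continuous_mult Va (fun _ => / Vs)). apply cVa. apply continuous_const.
      * pose proof (hVbd z). pose proof (Rinv_0_lt_compat Vs hVs). nra.
  - apply continuous_exp_comp. eapply cont_of_der, dMM.
Qed.

Lemma kernel_eq : forall t phi, kernel beta mu Va Vs x t phi = gg (t - phi) * exp (- MM t).
Proof.
  intros t phi. unfold kernel, gg.
  rewrite DR_eq by (apply ex_cont, cmx).
  change (fun s => mu (x s)) with mx. rewrite (chas mx (t - phi) t) by apply cmx.
  fold (MM t) (MM (t - phi)).
  replace (- (MM t - MM (t - phi))) with (MM (t - phi) + - MM t) by ring.
  rewrite exp_plus. ring.
Qed.

Lemma int_shift : forall t p q, RInt.RInt (fun phi => gg (t - phi)) p q = GG (t - p) - GG (t - q).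
Proof.
  intros t p q.
  assert (cl : forall z, continuous (fun y => gg (-1 * y + t)) z).
  { intro z. apply (continuous_comp (fun y => -1 * y + t) gg).
    - apply (cont_of_der _ _ (-1)). auto_derive; auto; ring.
    - apply cgg. }
  rewrite (RInt_ext (fun phi => gg (t - phi)) (fun y => gg (-1 * y + t)))
    by (intros; f_equal; ring).
  pose proof (RInt_comp_lin gg (-1) t p q (ex_cont _ _ _ cgg)) as E.
  rewrite (RInt_scal (fun y => gg (-1 * y + t)) p q (-1) (ex_cont _ _ _ cl)) in E.
  change (-1 * RInt.RInt (fun y => gg (-1 * y + t)) p q = RInt.RInt gg (-1 * p + t) (-1 * q + t)) in E.
  rewrite (chas gg) in E by apply cgg. fold (GG (-1 * q + t)) (GG (-1 * p + t)) in E.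
  replace (t - p) with (-1 * p + t) by ring. replace (t - q) with (-1 * q + t) by ring.
  lra.
Qed.

End Kern.

Ltac toR := match goal with |- ?a = ?b => change (@eq R a b) end.

Section AU.
Variables (beta delta Vs Vmin Vmax c1 c2 : R) (mu Va tmin tmax x : R -> R).
Hypothesis hVs : 0 < Vs.
Hypothesis hmu : forall u, continuity_pt mu u.
Hypothesis hVa : forall s, continuity_pt Va s.
Hypothesis hVmin : 0 < Vmin.
Hypothesis hVbd : forall s, Vmin <= Va s <= Vmax.
Hypothesis htmin : forall t, c1 = Defs.RInt Va (t - tmin t) t.
Hypothesis htmax : forall t, c2 = Defs.RInt Va (t - tmax t) t.
Hypothesis hx : forall t, continuity_pt x t.

Let g := gg beta Vs mu Va x.
Let G := GG beta Vs mu Va x.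
Let M := MM mu x.
Let cg := cgg beta Vs Vmin Vmax mu Va x hVs hmu hVa hVmin hVbd hx.

Lemma AU_eq t : A_U beta delta mu Va Vs tmin tmax x t
  = /(2*delta) * (exp (- M t) * (G (t - tmin t) - G (t - tmax t))).
Proof.
  unfold A_U. f_equal.
  rewrite (DR_ext _ (fun phi => g (t-phi) * exp (- M t)))
    by (intros; apply kernel_eq; auto).
  assert (cl : forall z, continuous (fun phi => g (t - phi)) z).
  { intro z. apply (continuous_comp (fun phi => t - phi) g).
    - apply (cont_of_der _ _ (-1)). auto_derive; auto; ring.
    - apply cg. }
  rewrite DR_eq.
  2:{ apply ex_cont. intro z. apply (continuous_mult (fun phi => g (t - phi)) (fun _ => exp (- M t))).
      apply cl. apply continuous_const. }
  rewrite (RInt_ext _ (fun phi => exp (- M t) * g (t - phi)))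
    by (intros; change (g (t - x0) * exp (- M t) = exp (- M t) * g (t - x0)); ring).
  pose proof (RInt_scal (fun phi => g (t - phi)) (tmin t) (tmax t) (exp (- M t)) (ex_cont _ _ _ cl)) as E.
  change (RInt.RInt (fun phi => exp (- M t) * g (t - phi)) (tmin t) (tmax t) = exp (- M t) * RInt.RInt (fun phi => g (t - phi)) (tmin t) (tmax t)) in E.
  rewrite E.
  unfold g. rewrite (int_shift beta Vs Vmin Vmax mu Va x hVs hmu hVa hVmin hVbd hx).
  reflexivity.
Qed.

Lemma AU_der t : is_derive (A_U beta delta mu Va Vs tmin tmax x) t
  (/ (2 * delta) * (kernel beta mu Va Vs x t (tmin t) * (Va t / Va (t - tmin t))
      - kernel beta mu Va Vs x t (tmax t) * (Va t / Va (t - tmax t)))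
   - mu (x t) * A_U beta delta mu Va Vs tmin tmax x t).
Proof.
  apply (is_derive_ext (fun t => /(2*delta) * (exp (- M t) * (G (t - tmin t) - G (t - tmax t))))).
  { intro; symmetry; apply AU_eq. }
  assert (dE : is_derive (fun t => exp (- M t)) t (- mx mu x t * exp (- M t))).
  { exact (is_derive_comp exp (fun t => - M t) t _ _ (is_derive_exp _)
            (is_derive_opp _ _ _ (dMM mu x hmu hx t))). }
  assert (dGa : is_derive (fun t => G (t - tmin t)) t (Va t / Va (t - tmin t) * g (t - tmin t))).
  { exact (is_derive_comp G (fun s => s - tmin s) t _ _ (prim g _ cg)
       (proj2 (is_derive_Reals _ _ _) (a_der Vmin Vmax c1 Va tmin hVa hVmin hVbd htmin t))). }
  assert (dGb : is_derive (fun t => G (t - tmax t)) t (Va t / Va (t - tmax t) * g (t - tmax t))).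
  { exact (is_derive_comp G (fun s => s - tmax s) t _ _ (prim g _ cg)
       (proj2 (is_derive_Reals _ _ _) (a_der Vmin Vmax c2 Va tmax hVa hVmin hVbd htmax t))). }
  pose proof (is_derive_scal _ t (/(2*delta)) _
     (is_derive_mult _ _ t _ _ dE (is_derive_minus _ _ t _ _ dGa dGb) ltac:(intros; apply Rmult_comm))) as HD.
  match type of HD with is_derive _ _ ?v => replace (_ - _) with v; [exact HD|] end.
  rewrite !kernel_eq by auto. rewrite AU_eq.
  change (plus ?a ?b) with (a + b). change (mult ?a ?b) with (a * b). change (minus ?a ?b) with (a - b).
  unfold mx. fold g. fold M.
  toR. ring.
Qed.

End AU.
Check AU_der.

Lemma cont_from_sub t0 (f g : R -> R) : cont_from t0 f -> (forall t, continuity_pt g t) ->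
  cont_from t0 (fun s => f s - g s).
Proof.
  intros Hf Hg t Ht eps He.
  destruct (Hf t Ht (eps/2) ltac:(lra)) as [d1 [Hd1 H1]].
  pose proof (Hg t) as Hgt.
  unfold continuity_pt, continue_in, limit1_in, limit_in in Hgt. simpl in Hgt. unfold R_dist in Hgt.
  destruct (Hgt (eps/2) ltac:(lra)) as [d2 [Hd2 H2]].
  exists (Rmin d1 d2). split; [apply Rmin_pos; lra|].
  intros s Hs Hsd.
  assert (A1 : Rabs (f s - f t) < eps/2) by (apply H1; [lra|]; eapply Rlt_le_trans; [exact Hsd|apply Rmin_l]).
  assert (A2 : Rabs (g s - g t) < eps/2).
  { destruct (Req_dec s t) as [->|Hne].
    - rewrite Rminus_diag, Rabs_R0. lra.
    - apply H2. split; [split; [exact I|auto]|]. eapply Rlt_le_trans; [exact Hsd|apply Rmin_r]. }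
  replace (f s - g s - (f t - g t)) with ((f s - f t) - (g s - g t)) by ring.
  eapply Rle_lt_trans; [apply Rabs_triang|]. rewrite Rabs_Ropp. lra.
Qed.

Lemma cont_from_all t0 (g : R -> R) : (forall t, continuity_pt g t) -> cont_from t0 g.
Proof.
  intros Hg t Ht eps He.
  pose proof (Hg t) as Hgt.
  unfold continuity_pt, continue_in, limit1_in, limit_in in Hgt. simpl in Hgt. unfold R_dist in Hgt.
  destruct (Hgt eps He) as [d2 [Hd2 H2]].
  exists d2. split; [lra|]. intros s Hs Hsd.
  destruct (Req_dec s t) as [->|Hne].
  - rewrite Rminus_diag, Rabs_R0. lra.
  - apply H2. split; [split; [exact I|auto]|]. exact Hsd.
Qed.

Lemma AU_hist beta delta mu Va Vs tmin tmax (x z : R -> R) t0 :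
  0 <= tmin t0 -> 0 <= tmax t0 -> (forall s, s <= t0 -> x s = z s) ->
  A_U beta delta mu Va Vs tmin tmax x t0 = A_U beta delta mu Va Vs tmin tmax z t0.
Proof.
  intros H1 H2 Hx. unfold A_U. f_equal. apply DR_ext. intros phi Hphi.
  assert (0 <= phi) by (pose proof (Rmin_glb _ _ _ H1 H2); lra).
  unfold kernel. rewrite (Hx (t0 - phi)) by lra.
  f_equal. f_equal. f_equal. apply DR_ext. intros s Hs.
  rewrite Rmin_left, Rmax_right in Hs by lra. rewrite Hx by lra. reflexivity.
Qed.

Theorem theorem4p2
  (F : R -> R -> R) (gamma mu : R -> R) (beta delta : R)
  (Va : R -> R) (Vs Vmin Vmax T : R) (tmin tmax : R -> R) (t0 : R)
  (hbeta : 0 < beta) (hdelta : 0 < delta)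
  (hVs : 0 < Vs) (hT : Vs * delta < T)
  (hmu : forall u, continuity_pt mu u)
  (hVa : forall s, continuity_pt Va s)
  (hVmin : 0 < Vmin) (hVbd : forall s, Vmin <= Va s <= Vmax)
  (htmin : forall t, T - Vs * delta = RInt Va (t - tmin t) t)
  (htmax : forall t, T + Vs * delta = RInt Va (t - tmax t) t) :
  (* (i) *)
  (forall rho x : R -> R,
     solves_U F gamma mu beta delta Va Vs tmin tmax t0 rho x ->
     solves_D F gamma mu beta delta Va Vs tmin tmax t0 rho x
       (A_U beta delta mu Va Vs tmin tmax x) /\
     A_U beta delta mu Va Vs tmin tmax x t0
       = A_U beta delta mu Va Vs tmin tmax rho t0) /\
  (* (ii) *)
  (forall eta x y : R -> R,
     solves_D F gamma mu beta delta Va Vs tmin tmax t0 eta x y ->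
     ((solves_U F gamma mu beta delta Va Vs tmin tmax t0 eta x /\
       forall t, t0 <= t -> y t = A_U beta delta mu Va Vs tmin tmax x t)
      <-> y t0 = A_U beta delta mu Va Vs tmin tmax eta t0)).
Proof.
  assert (Hvd : 0 < Vs * delta) by nra.
  assert (P1 : 0 <= tmin t0).
  { left. apply (tmin_pos Vmin Vmax (T - Vs * delta) Va tmin hVa hVmin hVbd htmin). lra. }
  assert (P2 : 0 <= tmax t0).
  { left. apply (tmin_pos Vmin Vmax (T + Vs * delta) Va tmax hVa hVmin hVbd htmax). lra. }
  pose proof (fun x hx t => AU_der beta delta Vs Vmin Vmax _ _ mu Va tmin tmax x
                 hVs hmu hVa hVmin hVbd htmin htmax hx t) as dA.
  assert (cA : forall x, (forall t, continuity_pt x t) -> forall t,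
             continuity_pt (A_U beta delta mu Va Vs tmin tmax x) t).
  { intros x hx t. apply derivable_continuous_pt. eexists. apply is_derive_Reals, dA, hx. }
  split.
  - intros rho x [Hh [Hc Hd]]. split.
    + split; [exact Hh|]. split; [exact Hc|]. split; [apply cont_from_all, cA, Hc|].
      split; [exact Hd|]. intros t Ht. apply is_derive_Reals, dA, Hc.
    + apply AU_hist; auto.
  - intros eta x y [Hh [Hc [Hy [Hdx Hdy]]]]. split.
    + intros [_ Heq]. rewrite Heq by lra. apply AU_hist; auto.
    + intro Hy0.
      assert (Heq : forall t, t0 <= t -> y t = A_U beta delta mu Va Vs tmin tmax x t).
      { intros t Ht.
        assert (W : (fun s => y s - A_U beta delta mu Va Vs tmin tmax x s) t = 0).
        { refine (uniq (fun s => mu (x s)) (fun s => y s - A_U beta delta mu Va Vs tmin tmax x s) t0 _ _ _ _ t Ht).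
          - exact (cmx mu x hmu Hc).
          - apply cont_from_sub; auto.
          - intros s Hs. pose proof (derivable_pt_lim_minus _ _ _ _ _ (Hdy s Hs)
                 (proj1 (is_derive_Reals _ _ _) (dA x Hc s))) as HD.
            match type of HD with derivable_pt_lim _ _ ?v => replace (- mu (x s) * _) with v; [exact HD|] end.
            ring.
          - cbv beta. rewrite Hy0. rewrite (AU_hist _ _ _ _ _ _ _ x eta t0 P1 P2 Hh). ring. }
        cbv beta in W. lra. }
      split; [|exact Heq]. split; [exact Hh|]. split; [exact Hc|].
      intros t Ht. rewrite <- Heq by lra. exact (Hdx t Ht).
Qed.
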